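(* For each positive integer $n$, let $I_n$ be the instance of online stochastic matching with timeouts with $n$ items, $m=n$ customer types, $T=n$ time-steps, $q_j=1/n$, $\ell_j=n$ for all $j$, and $p_{ij}=1/n$, $r_{ij}=1$ for all $i,j$. Let $\mathsf{OPT}_n$ be the optimal value of the LP for $I_n$ and let $A_n$ be the supremum, over all policies, of the expected revenue on $I_n$. Then $\limsup_{n\to\infty} A_n/\mathsf{OPT}_n\le 1-\ln(2-1/e)$. Consequently, for every $\epsilon>0$ there is an instance (satisfying both $\sum_i p_{ij}\le 1$ and $\ell_j\ge n$ for every $j$) on which no policy obtains expected revenue larger than $(1-\ln(2-1/e)+\epsilon)\cdot\mathsf{OPT}$.
   Context: Online stochastic matching with timeouts. There are $n$ items, each with a single unit of inventory, $m$ customer types, and $T$ discrete time-steps. In each time-step $t=1,\dots,T$, independently of everything else, a customer of type $j$ arrives with probability $q_j\ge 0$ (where $\sum_{j}q_j\le 1$). Each type $j$ has a patience level $\ell_j\in\mathbb{Z}_{>0}$. When a customer of type $j$ arrives, the platform may offer her items one at a time; it may only offer items still in inventory and never offers the same item twice to the same customer. Each time item $i$ is offered, she purchases it with probability $p_{ij}\in[0,1]$, independently of everything else; then the platform earns $r_{ij}\ge 0$, item $i$ is sold out, and the customer leaves. The customer leaves after $\ell_j$ offers without a purchase. A customer is completely processed before the next time-step. A policy decides (possibly randomly) what to offer. The LP is: maximize $\sum_{j=1}^m Tq_j\sum_{i=1}^n r_{ij}p_{ij}x_{ij}$ subject to $\sum_{j=1}^m Tq_jp_{ij}x_{ij}\le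 1$ for all $i$; $\sum_{i=1}^n p_{ij}x_{ij}\le 1$ for all $j$; $\sum_{i=1}^n x_{ij}\le \ell_j$ for all $j$; $0\le x_{ij}\le 1$ for all $i,j$. *)

(* Defs.v *)
From Stdlib Require Import Reals List.
Import ListNotations.
Open Scope R_scope.

Fixpoint rsum (k : nat) (f : nat -> R) : R :=
  match k with O => 0 | S k' => rsum k' f + f k' end.

(** An instance of online stochastic matching with timeouts.
    Items are 0..n-1, customer types 0..m-1, time-steps 1..T. *)
Record instance := mkInstance {
  n_items : nat;
  m_types : nat;
  horizon : nat;
  q : nat -> R;          (* arrival probability of type j *)
  patience : nat -> nat;
  p : nat -> nat -> R;   (* p i j : purchase probability *)
  r : nat -> nat -> R    (* r i j : revenue *)
}.

Definition wf_instance (I : instance) : Prop :=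
  (forall j, (j < m_types I)%nat -> 0 <= q I j) /\
  rsum (m_types I) (q I) <= 1 /\
  (forall j, (j < m_types I)%nat -> (0 < patience I j)%nat) /\
  (forall i j, (i < n_items I)%nat -> (j < m_types I)%nat ->
      0 <= p I i j <= 1 /\ 0 <= r I i j).

(** Events of the process; histories are lists of events, most recent first. *)
Inductive event :=
  | Arrive (j : option nat)        (* a time-step starts; Some j: a type-j customer arrives *)
  | Offer (i : nat) (bought : bool). (* item i offered to current customer, with outcome *)

Definition history := list event.

Fixpoint cur_seg (h : history) : history :=
  match h with
  | [] => []
  | Arrive _ :: _ => []
  | e :: h' => e :: cur_seg h'
  end.

(** Actions: None = stop offering (customer leaves), Some i = offer item i. *)
Definition allowed (I : instance) (h : history) (a : option nat) : Prop :=
  match a with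
  | None => True
  | Some i => (i < n_items I)%nat /\ ~ In (Offer i true) h /\
              ~ (exists b, In (Offer i b) (cur_seg h))
  end.

(** A (possibly randomized, history-dependent) policy: for every history,
    a probability distribution over the allowed actions. *)
Definition policy := history -> option nat -> R.

Definition valid_policy (I : instance) (pol : policy) : Prop :=
  forall h,
    (forall a, 0 <= pol h a) /\
    (forall a, ~ allowed I h a -> pol h a = 0) /\
    pol h None + rsum (n_items I) (fun i => pol h (Some i)) = 1.

(** Expected future revenue while processing the current customer of type j,
    with k offers of patience left; cont = value after the customer leaves. *)
Fixpoint cust_val (I : instance) (pol : policy) (k j : nat) (h : history)
    (cont : history -> R) {struct k} : R :=
  match k with
  | O => cont h
  | S k' =>
      pol h None * cont h +
      rsum (n_items I) (fun i =>
        pol h (Some i) *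
          (p I i j * (r I i j + cont (Offer i true :: h)) +
           (1 - p I i j) * cust_val I pol k' j (Offer i false :: h) cont))
  end.

Fixpoint value (I : instance) (pol : policy) (t : nat) (h : history) : R :=
  match t with
  | O => 0
  | S t' =>
      rsum (m_types I) (fun j =>
        q I j * cust_val I pol (patience I j) j (Arrive (Some j) :: h) (value I pol t'))
      + (1 - rsum (m_types I) (q I)) * value I pol t' (Arrive None :: h)
  end.

Definition expected_revenue (I : instance) (pol : policy) : R :=
  value I pol (horizon I) [].

Definition achievable (I : instance) (v : R) : Prop :=
  exists pol, valid_policy I pol /\ v = expected_revenue I pol.

Definition lp_feasible (I : instance) (x : nat -> nat -> R) : Prop :=
  (forall i, (i < n_items I)%nat ->
     rsum (m_types I) (fun j => INR (horizon I) * q I j * p I i j * x i j) <= 1) /\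
  (forall j, (j < m_types I)%nat ->
     rsum (n_items I) (fun i => p I i j * x i j) <= 1) /\
  (forall j, (j < m_types I)%nat ->
     rsum (n_items I) (fun i => x i j) <= INR (patience I j)) /\
  (forall i j, (i < n_items I)%nat -> (j < m_types I)%nat -> 0 <= x i j <= 1).

Definition lp_obj (I : instance) (x : nat -> nat -> R) : R :=
  rsum (m_types I) (fun j =>
    INR (horizon I) * q I j * rsum (n_items I) (fun i => r I i j * p I i j * x i j)).

Definition lp_value (I : instance) (v : R) : Prop :=
  exists x, lp_feasible I x /\ v = lp_obj I x.

Definition inst_n (n : nat) : instance :=
  mkInstance n n n (fun _ => / INR n) (fun _ => n) (fun _ _ => / INR n) (fun _ _ => 1).

Definition ratio_bound : R := 1 - ln (2 - / exp 1).

(* Main.v *)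
Require Import Defs.
From Stdlib Require Import Reals List Lra Lia Classical Bool ZArith.
Import ListNotations.
Open Scope R_scope.

Lemma ln_ge (y : R) : 0 < y -> 1 - / y <= ln y.
Proof.
  intros Hy. pose proof (exp_ineq1_le (- ln y)) as H.
  rewrite exp_Ropp, exp_ln in H by lra. lra.
Qed.

Lemma ln_le_m1 (y : R) : 0 < y -> ln y <= y - 1.
Proof.
  intros Hy. pose proof (exp_ineq1_le (ln y)) as H.
  rewrite exp_ln in H by lra. lra.
Qed.

Lemma ln_mono (x y : R) : 0 < x -> x <= y -> ln x <= ln y.
Proof.
  intros Hx Hxy. destruct (Req_dec x y) as [->|Hne]; [lra|].
  left. apply ln_increasing; lra.
Qed.

Lemma exp_mono (x y : R) : x <= y -> exp x <= exp y.
Proof.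
  intros Hxy. destruct (Req_dec x y) as [->|Hne]; [lra|].
  left. apply exp_increasing; lra.
Qed.

Lemma exp_convex (th a b : R) : 0 <= th <= 1 ->
  exp (th * a + (1 - th) * b) <= th * exp a + (1 - th) * exp b.
Proof.
  intros Hth. set (c := th * a + (1 - th) * b).
  assert (Ea : exp a = exp c * exp (a - c)) by (rewrite <- exp_plus; f_equal; ring).
  assert (Eb : exp b = exp c * exp (b - c)) by (rewrite <- exp_plus; f_equal; ring).
  pose proof (exp_ineq1_le (a - c)). pose proof (exp_ineq1_le (b - c)).
  pose proof (exp_pos c).
  rewrite Ea, Eb.
  assert (th * (exp c * exp (a - c)) >= th * (exp c * (1 + (a - c)))) by
    (apply Rle_ge, Rmult_le_compat_l; [lra|]; apply Rmult_le_compat_l; lra).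
  assert ((1-th) * (exp c * exp (b - c)) >= (1-th) * (exp c * (1 + (b - c)))) by
    (apply Rle_ge, Rmult_le_compat_l; [lra|]; apply Rmult_le_compat_l; lra).
  assert (th * (exp c * (1 + (a - c))) + (1-th) * (exp c * (1 + (b - c))) = exp c)
    by (unfold c; ring).
  lra.
Qed.

Definition g (lam x : R) : R := x - 1 + exp (- (lam * x)).
Fixpoint G (lam : R) (t : nat) (x : R) : R :=
  match t with O => x | S t' => G lam t' (g lam x) end.

Lemma g_mono lam u v : 0 < lam <= 1 -> 0 <= u -> u <= v -> g lam u <= g lam v.
Proof.
  intros Hl Hu Huv. unfold g.
  assert (E : exp (- (lam * v)) = exp (- (lam * u)) * exp (- (lam * (v - u))))
    by (rewrite <- exp_plus; f_equal; ring).
  pose proof (exp_ineq1_le (- (lam * (v - u)))).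
  assert (exp (- (lam * u)) <= 1).
  { rewrite <- exp_0. apply exp_mono. nra. }
  pose proof (exp_pos (- (lam * u))).
  rewrite E.
  assert (exp (- (lam * u)) * exp (- (lam * (v - u))) >= exp (- (lam * u)) * (1 + - (lam * (v - u))))
    by (apply Rle_ge, Rmult_le_compat_l; lra).
  assert (exp (- (lam * u)) * (lam * (v - u)) <= 1 * (v - u)).
  { apply Rmult_le_compat; nra. }
  nra.
Qed.

Lemma g0 lam : g lam 0 = 0.
Proof. unfold g. rewrite Rmult_0_r, Ropp_0, exp_0. ring. Qed.

Lemma g_nonneg lam u : 0 < lam <= 1 -> 0 <= u -> 0 <= g lam u.
Proof. intros. rewrite <- (g0 lam). apply g_mono; lra. Qed.

Lemma g_convex lam th u v : 0 <= th <= 1 ->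
  g lam (th * u + (1 - th) * v) <= th * g lam u + (1 - th) * g lam v.
Proof.
  intros Hth. unfold g.
  replace (- (lam * (th * u + (1 - th) * v))) with
     (th * (- (lam * u)) + (1 - th) * (- (lam * v))) by ring.
  pose proof (exp_convex th (- (lam * u)) (- (lam * v)) Hth). nra.
Qed.

Lemma G_props lam t : 0 < lam <= 1 ->
  (forall u, 0 <= u -> 0 <= G lam t u) /\
  (forall u v, 0 <= u -> u <= v -> G lam t u <= G lam t v) /\
  (forall th u v, 0 <= th <= 1 -> 0 <= u -> 0 <= v ->
     G lam t (th * u + (1 - th) * v) <= th * G lam t u + (1 - th) * G lam t v).
Proof.
  intros Hl. induction t as [|t [IH1 [IH2 IH3]]]; simpl.
  - split; [auto|split; [auto|]]. intros; lra.
  - split; [|split].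
    + intros u Hu. apply IH1, g_nonneg; auto.
    + intros u v Hu Huv. apply IH2; [apply g_nonneg; auto|apply g_mono; auto].
    + intros th u v Hth Hu Hv.
      pose proof (g_nonneg lam u Hl Hu). pose proof (g_nonneg lam v Hl Hv).
      eapply Rle_trans; [apply IH2|apply IH3; auto].
      * apply g_nonneg; auto. nra.
      * apply g_convex; auto.
Qed.

Definition w (lam u0 : R) (s : nat) : R := ln (1 + u0 * (1 - lam) ^ s) / lam.

Lemma w_nonneg lam u0 s : 0 < lam < 1 -> 0 <= u0 -> 0 <= w lam u0 s.
Proof.
  intros Hl Hu. unfold w. pose proof (pow_le (1 - lam) s ltac:(lra)).
  apply Rmult_le_pos; [|left; apply Rinv_0_lt_compat; lra].
  rewrite <- ln_1. apply ln_mono; nra.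
Qed.

Lemma euler lam u0 s : 0 < lam < 1 -> 0 <= u0 ->
  w lam u0 (S s) <= g lam (w lam u0 s).
Proof.
  intros Hl Hu. unfold w, g. simpl.
  set (U := u0 * (1 - lam) ^ s).
  assert (HU : 0 <= U) by (unfold U; pose proof (pow_le (1 - lam) s ltac:(lra)); nra).
  replace (u0 * ((1 - lam) * (1 - lam) ^ s)) with ((1 - lam) * U) by (unfold U; ring).
  replace (- (lam * (ln (1 + U) / lam))) with (- ln (1 + U)) by (field; lra).
  rewrite exp_Ropp, exp_ln by lra.
  assert (Hy : 0 < (1 + U) / (1 + (1 - lam) * U)).
  { apply Rdiv_lt_0_compat; nra. }
  pose proof (ln_ge _ Hy) as H.
  unfold Rdiv in H. rewrite ln_mult, ln_Rinv in H by (try apply Rinv_0_lt_compat; nra).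
  rewrite Rinv_mult, Rinv_inv in H.
  assert (E : 1 - / (1 + U) * (1 + (1 - lam) * U) = lam * (1 - / (1 + U))) by (field; lra).
  rewrite E in H.
  apply (Rmult_le_reg_l lam); [lra|].
  replace (lam * (ln (1 + (1 - lam) * U) / lam)) with (ln (1 + (1 - lam) * U)) by (field; lra).
  replace (lam * (ln (1 + U) / lam - 1 + / (1 + U))) with (ln (1 + U) - lam * (1 - / (1+U)))
    by (field; lra).
  lra.
Qed.

Lemma compare lam u0 t : 0 < lam < 1 -> 0 <= u0 ->
  forall s x, 0 <= x -> w lam u0 s <= x -> w lam u0 (s + t) <= G lam t x.
Proof.
  intros Hl Hu. induction t as [|t IH]; intros s x Hx Hw; simpl.
  - rewrite Nat.add_0_r. auto.
  - replace (s + S t)%nat with (S s + t)%nat by lia.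
    apply IH. apply g_nonneg; lra.
    eapply Rle_trans; [apply euler; auto|]. apply g_mono; try lra. apply w_nonneg; auto.
Qed.

Lemma INR_ge4 n : (4 <= n)%nat -> 4 <= INR n.
Proof. intros H. apply le_INR in H. simpl in H. lra. Qed.

Definition lamn (n : nat) : R := - ln (1 - / INR n).
Definition Bc : R := 2 - / exp 1.

Lemma lam_bounds n : (4 <= n)%nat ->
  / INR n <= lamn n <= / (INR n - 1).
Proof.
  intros Hn. pose proof (INR_ge4 n Hn) as HN.
  assert (0 < / INR n < 1) by (split; [apply Rinv_0_lt_compat; lra|]; rewrite <- Rinv_1; apply Rinv_lt_contravar; lra).
  unfold lamn. split.
  - pose proof (ln_le_m1 (1 - / INR n) ltac:(lra)). lra.
  - pose proof (ln_ge (1 - / INR n) ltac:(lra)).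
    replace (1 - / (1 - / INR n)) with (- / (INR n - 1)) in H0 by (field; lra). lra.
Qed.

Lemma w0 lam x : 0 < lam -> w lam (exp (lam * x) - 1) 0 = x.
Proof. intros. unfold w. simpl. rewrite Rmult_1_r.
  replace (1 + (exp (lam * x) - 1)) with (exp (lam * x)) by ring.
  rewrite ln_exp. field. lra. Qed.

Lemma e_gt2 : 2 < exp 1.
Proof. pose proof (exp_ineq1 1 ltac:(lra)). lra. Qed.

Lemma lnB_le1 : ln Bc <= 1.
Proof. unfold Bc. pose proof e_gt2. assert (0 < / exp 1) by (apply Rinv_0_lt_compat; lra).
  assert (/ exp 1 < 1) by (pose proof (Rinv_lt_contravar 1 (exp 1)) as HH; rewrite Rinv_1 in HH; apply HH; lra).
  rewrite <- (ln_exp 1) at 2. apply ln_mono; lra. Qed.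

Lemma wn_bound n : (4 <= n)%nat ->
  INR n * ln Bc - 4 <= w (lamn n) (exp (lamn n * INR n) - 1) n.
Proof.
  intros Hn. pose proof (INR_ge4 n Hn) as HN.
  destruct (lam_bounds n Hn) as [L1 L2].
  set (lam := lamn n) in *.
  assert (0 < / INR n) by (apply Rinv_0_lt_compat; lra).
  assert (L3 : / (INR n - 1) <= / 3) by (apply Rinv_le_contravar; lra).
  assert (Hl : 0 < lam < 1) by lra.
  assert (Hln : 1 <= lam * INR n).
  { apply (Rmult_le_compat_r (INR n)) in L1; [|lra]. rewrite Rinv_l in L1; lra. }
  assert (He : exp 1 <= exp (lam * INR n)) by (apply exp_mono; lra).
  pose proof e_gt2.
  set (d := 2 / (INR n - 2)).
  assert (Hd : 0 < d <= 1) by (unfold d; split; [apply Rdiv_lt_0_compat; lra|];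
     unfold Rdiv; apply (Rmult_le_reg_r (INR n - 2)); [lra|]; rewrite Rmult_assoc, Rinv_l; lra).
  assert (P1 : exp (- 1) * (1 - d) <= (1 - lam) ^ n).
  { rewrite <- (exp_ln ((1 - lam) ^ n)) by (apply pow_lt; lra).
    rewrite ln_pow by lra.
    pose proof (ln_ge (1 - lam) ltac:(lra)) as H1.
    replace (1 - / (1 - lam)) with (- (lam / (1 - lam))) in H1 by (field; lra).
    assert (K : INR n * (lam / (1 - lam)) <= 1 + d).
    { assert (Q : lam / (1 - lam) <= / (INR n - 2)).
      { unfold Rdiv. apply (Rmult_le_reg_r (1 - lam)); [lra|].
        rewrite Rmult_assoc, Rinv_l, Rmult_1_r by lra.
        apply (Rmult_le_reg_l (INR n - 2)); [lra|].
        rewrite <- Rmult_assoc, Rinv_r, Rmult_1_l by lra.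
        apply (Rmult_le_compat_l (INR n - 1)) in L2; [|lra].
        rewrite Rinv_r in L2 by lra. nra. }
      unfold d. apply (Rmult_le_compat_l (INR n)) in Q; [|lra].
      replace (INR n * / (INR n - 2)) with (1 + 2 / (INR n - 2)) in Q by (field; lra). lra. }
    assert (E1 : exp (- 1) * (1 - d) <= exp (- (1 + d))).
    { replace (- (1 + d)) with (- 1 + - d) by ring. rewrite exp_plus.
      pose proof (exp_ineq1_le (- d)). pose proof (exp_pos (-1)). nra. }
    eapply Rle_trans; [apply E1|]. apply exp_mono.
    apply (Rmult_le_compat_l (INR n)) in H1; lra. }
  assert (Ee : exp (- 1) = / exp 1) by apply exp_Ropp.
  assert (0 < / exp 1 < / 2) by (split; [apply Rinv_0_lt_compat; lra|apply Rinv_lt_contravar; lra]).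
  assert (P2 : Bc - (1 - / exp 1) * d <= 1 + (exp (lam * INR n) - 1) * (1 - lam) ^ n).
  { unfold Bc. rewrite Ee in P1.
    assert ((exp 1 - 1) * (/ exp 1 * (1 - d)) <= (exp (lam * INR n) - 1) * (1 - lam) ^ n).
    { apply Rmult_le_compat; try nra. }
    replace ((exp 1 - 1) * (/ exp 1 * (1 - d))) with ((1 - / exp 1) * (1 - d)) in H2
      by (field; lra). nra. }
  assert (P3 : ln Bc - d <= ln (1 + (exp (lam * INR n) - 1) * (1 - lam) ^ n)).
  { assert (HB : 1 <= Bc - (1 - / exp 1) * d) by (unfold Bc; nra).
    assert (HBc : 1 <= Bc) by (unfold Bc; lra).
    assert (Hcd : 0 <= (1 - / exp 1) * d <= d) by nra.
    set (cd := (1 - / exp 1) * d) in *.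
    assert (ln Bc - d <= ln (Bc - cd)).
    { pose proof (ln_ge ((Bc - cd) / Bc) ltac:(apply Rdiv_lt_0_compat; lra)).
      unfold Rdiv in H2. rewrite ln_mult, ln_Rinv in H2 by (try apply Rinv_0_lt_compat; lra).
      rewrite Rinv_mult, Rinv_inv in H2.
      replace (1 - / (Bc - cd) * Bc) with (- (cd / (Bc - cd))) in H2
        by (field; lra).
      assert (cd / (Bc - cd) <= d).
      { unfold Rdiv. apply (Rmult_le_reg_r (Bc - cd)); [lra|].
        rewrite Rmult_assoc, Rinv_l by lra. nra. }
      lra. }
    eapply Rle_trans; [apply H2|]. apply ln_mono; lra. }
  assert (P4 : 0 <= ln (1 + (exp (lam * INR n) - 1) * (1 - lam) ^ n)).
  { rewrite <- ln_1. apply ln_mono; [lra|]. pose proof (pow_le (1 - lam) n ltac:(lra)). nra. }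
  unfold w.
  assert (Hil : INR n - 1 <= / lam).
  { apply (Rmult_le_reg_r lam); [lra|]. rewrite Rinv_l by lra.
    apply (Rmult_le_compat_l (INR n - 1)) in L2; [|lra]. rewrite Rinv_r in L2; lra. }
  set (Lg := ln (1 + (exp (lam * INR n) - 1) * (1 - lam) ^ n)) in *.
  unfold Rdiv. pose proof lnB_le1.
  assert ((INR n - 1) * d <= 3).
  { unfold d. replace ((INR n - 1) * (2 / (INR n - 2))) with (2 + 2 / (INR n - 2)) by (field; lra).
    fold d. lra. }
  assert (Lg * / lam >= Lg * (INR n - 1)) by (apply Rle_ge, Rmult_le_compat_l; lra).
  nra.
Qed.

Definition is_sold (h : history) (i : nat) : bool :=
  existsb (fun e => match e with Offer i' true => Nat.eqb i i' | _ => false end) h.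
Definition is_off (h : history) (i : nat) : bool :=
  existsb (fun e => match e with Offer i' _ => Nat.eqb i i' | _ => false end) (cur_seg h).

Lemma is_sold_spec h i : is_sold h i = true <-> In (Offer i true) h.
Proof.
  unfold is_sold. rewrite existsb_exists. split.
  - intros [e [He Hm]]. destruct e as [x|i' b]; [discriminate|].
    destruct b; [|discriminate]. apply Nat.eqb_eq in Hm. subst. auto.
  - intros H. exists (Offer i true). split; auto. apply Nat.eqb_refl.
Qed.

Lemma is_off_spec h i : is_off h i = true <-> exists b, In (Offer i b) (cur_seg h).
Proof.
  unfold is_off. rewrite existsb_exists. split.
  - intros [e [He Hm]]. destruct e as [x|i' b]; [discriminate|].
    apply Nat.eqb_eq in Hm. subst. eauto.
  - intros [b H]. exists (Offer i b). split; auto. apply Nat.eqb_refl.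
Qed.

Fixpoint ncount (k : nat) (f : nat -> bool) : nat :=
  match k with O => O | S k' => (ncount k' f + (if f k' then 1 else 0))%nat end.

Lemma ncount_ext k f f' : (forall i, (i < k)%nat -> f i = f' i) -> ncount k f = ncount k f'.
Proof. induction k; simpl; intros H; auto. rewrite IHk by (intros; apply H; lia).
  rewrite H by lia. auto. Qed.

Lemma ncount_le k f f' : (forall i, (i < k)%nat -> f i = true -> f' i = true) ->
  (ncount k f <= ncount k f')%nat.
Proof. induction k; simpl; intros H; auto.
  specialize (IHk ltac:(intros; apply H; auto; lia)).
  destruct (f k) eqn:E; [rewrite (H k) by auto; lia|destruct (f' k); lia]. Qed.

Lemma ncount_drop k f f' i : (i < k)%nat -> f i = true -> f' i = false ->
  (forall j, (j < k)%nat -> j <> i -> f' j = f j) -> S (ncount k f') = ncount k f.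
Proof.
  induction k; simpl; intros Hi Hf Hf' Hj; [lia|].
  destruct (Nat.eq_dec i k) as [->|Hne].
  - rewrite Hf, Hf'. rewrite (ncount_ext k f' f) by (intros; apply Hj; lia). lia.
  - rewrite <- IHk by (auto; try lia; intros; apply Hj; lia).
    rewrite (Hj k) by lia. lia.
Qed.

Lemma ncount_all k : ncount k (fun _ => true) = k.
Proof. induction k; simpl; auto; lia. Qed.

Definition rem (n : nat) (h : history) : nat := ncount n (fun i => negb (is_sold h i)).
Definition offl (n : nat) (h : history) : nat :=
  ncount n (fun i => negb (is_sold h i) && negb (is_off h i)).

Lemma offl_le_rem n h : (offl n h <= rem n h)%nat.
Proof. apply ncount_le. intros i _ H. apply andb_prop in H. tauto. Qed.

Lemma rem_false n i h : rem n (Offer i false :: h) = rem n h.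
Proof. reflexivity. Qed.

Lemma rem_arrive n x h : rem n (Arrive x :: h) = rem n h.
Proof. reflexivity. Qed.

Lemma offl_arrive n x h : offl n (Arrive x :: h) = rem n h.
Proof. unfold offl, rem. apply ncount_ext. intros. unfold is_off. simpl.
  destruct (is_sold h i); reflexivity. Qed.

Lemma rem_true n i h : (i < n)%nat -> is_sold h i = false ->
  S (rem n (Offer i true :: h)) = rem n h.
Proof.
  intros Hi Hs. unfold rem. apply ncount_drop with i; auto.
  - rewrite Hs. auto.
  - unfold is_sold. simpl. rewrite Nat.eqb_refl. auto.
  - intros j _ Hj. unfold is_sold. simpl. apply Nat.eqb_neq in Hj. rewrite Hj. auto.
Qed.

Lemma offl_false n i h : (i < n)%nat -> is_sold h i = false -> is_off h i = false ->
  S (offl n (Offer i false :: h)) = offl n h.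
Proof.
  intros Hi Hs Ho. unfold offl. apply ncount_drop with i; auto.
  - rewrite Hs, Ho. auto.
  - unfold is_off. simpl. rewrite Nat.eqb_refl. rewrite andb_false_r. auto.
  - intros j _ Hj. unfold is_off, is_sold. simpl. apply Nat.eqb_neq in Hj. rewrite Hj. auto.
Qed.

Lemma rem_nil n : rem n [] = n.
Proof. unfold rem. rewrite <- (ncount_all n) at 2. apply ncount_ext. auto. Qed.

Lemma rsum_le k f f' : (forall i, (i < k)%nat -> f i <= f' i) -> rsum k f <= rsum k f'.
Proof. induction k; simpl; intros H; [lra|].
  pose proof (IHk ltac:(intros; apply H; lia)). pose proof (H k ltac:(lia)). lra. Qed.

Lemma rsum_mult_r k f c : rsum k (fun i => f i * c) = rsum k f * c.
Proof. induction k; simpl; [ring|]. rewrite IHk. ring. Qed.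

Lemma rsum_const k c : rsum k (fun _ => c) = INR k * c.
Proof. induction k; simpl; [ring|]. rewrite IHk. destruct k; simpl; ring. Qed.

Lemma pow_le_1 a s : 0 <= a <= 1 -> 0 <= a ^ s <= 1.
Proof. intros. split; [apply pow_le; lra|]. rewrite <- (pow1 s). apply pow_incr. lra. Qed.

Lemma cust_bound n pol (Hn : (1 <= n)%nat) (Hv : valid_policy (inst_n n) pol)
  (cont : history -> R) X Y m :
  (forall h', rem n h' = m -> cont h' <= Y) ->
  (forall h', S (rem n h') = m -> cont h' <= X) ->
  Y <= 1 + X ->
  forall c j h, rem n h = m ->
  cust_val (inst_n n) pol c j h cont <= Y + (1 + X - Y) * (1 - (1 - / INR n) ^ offl n h).
Proof.
  intros HY HX HXY.
  assert (HN : 1 <= INR n) by (apply le_INR in Hn; simpl in Hn; lra).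
  assert (Hinv : 0 < / INR n <= 1).
  { split; [apply Rinv_0_lt_compat; lra|]. rewrite <- Rinv_1. apply Rinv_le_contravar; lra. }
  set (a := 1 - / INR n).
  assert (Ha : 0 <= a <= 1) by (unfold a; lra).
  induction c as [|c IH]; intros j h Hm; cbn [cust_val].
  - pose proof (pow_le_1 a (offl n h) Ha). specialize (HY h Hm).
    assert (0 <= (1 + X - Y) * (1 - a ^ offl n h)) by (apply Rmult_le_pos; lra). lra.
  - set (B := Y + (1 + X - Y) * (1 - a ^ offl n h)).
    destruct (Hv h) as [Hpos [Hall Hsum]]. cbn [n_items inst_n] in Hsum.
    assert (HB : Y <= B).
    { pose proof (pow_le_1 a (offl n h) Ha).
      assert (0 <= (1 + X - Y) * (1 - a ^ offl n h)) by (apply Rmult_le_pos; lra). unfold B; lra. }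
    cbn [n_items p r inst_n].
    assert (T1 : pol h None * cont h <= pol h None * B).
    { apply Rmult_le_compat_l; auto. specialize (HY h Hm). lra. }
    assert (T2 : rsum n (fun i => pol h (Some i) *
        (/ INR n * (1 + cont (Offer i true :: h)) +
         (1 - / INR n) * cust_val (inst_n n) pol c j (Offer i false :: h) cont))
        <= rsum n (fun i => pol h (Some i) * B)).
    { apply rsum_le. intros i Hi.
      destruct (classic (allowed (inst_n n) h (Some i))) as [Hal|Hna].
      - cbn [allowed inst_n n_items] in Hal. destruct Hal as [_ [Hs Ho]].
        assert (Es : is_sold h i = false).
        { destruct (is_sold h i) eqn:E; auto. apply is_sold_spec in E. contradiction. }
        assert (Eo : is_off h i = false).
        { destruct (is_off h i) eqn:E; auto. apply is_off_spec in E. contradiction. }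
        apply Rmult_le_compat_l; [apply Hpos|].
        pose proof (HX _ (eq_trans (rem_true n i h Hi Es) Hm)) as C1.
        pose proof (IH j (Offer i false :: h) ltac:(rewrite rem_false; auto)) as C2.
        pose proof (offl_false n i h Hi Es Eo) as Eoff.
        fold a in C2. unfold B. rewrite <- Eoff. simpl pow.
        set (s' := offl n (Offer i false :: h)) in *.
        assert (A1 : / INR n * (1 + cont (Offer i true :: h)) <= / INR n * (1 + X))
          by (apply Rmult_le_compat_l; lra).
        assert (A2 : a * cust_val (inst_n n) pol c j (Offer i false :: h) cont <=
                     a * (Y + (1 + X - Y) * (1 - a ^ s'))) by (apply Rmult_le_compat_l; lra).
        fold a.
        replace (/ INR n) with (1 - a) in * by (unfold a; ring).
        assert (E : (1 - a) * (1 + X) + a * (Y + (1 + X - Y) * (1 - a ^ s')) =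
                    Y + (1 + X - Y) * (1 - a * a ^ s')) by ring.
        lra.
      - rewrite (Hall _ Hna). lra. }
    rewrite rsum_mult_r in T2.
    assert (F : pol h None * B + rsum n (fun i => pol h (Some i)) * B = B)
      by (rewrite <- Rmult_plus_distr_r, Hsum; ring).
    unfold a. lra.
Qed.

Lemma G_zero lam t : G lam t 0 = 0.
Proof. induction t; simpl; auto. rewrite g0. auto. Qed.

Lemma exp_lam n m : (2 <= n)%nat ->
  exp (- (lamn n * INR m)) = (1 - / INR n) ^ m.
Proof.
  intros Hn. assert (HN : 2 <= INR n) by (apply le_INR in Hn; simpl in Hn; lra).
  assert (0 < / INR n < 1) by (split; [apply Rinv_0_lt_compat; lra|];
     pose proof (Rinv_lt_contravar 1 (INR n)) as HH; rewrite Rinv_1 in HH; apply HH; lra).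
  unfold lamn. rewrite <- (exp_ln ((1 - / INR n) ^ m)) by (apply pow_lt; lra).
  rewrite ln_pow by lra. f_equal. ring.
Qed.

Lemma value_bound n pol (Hn : (4 <= n)%nat) (Hv : valid_policy (inst_n n) pol) :
  forall t h, value (inst_n n) pol t h <=
     INR (rem n h) - G (lamn n) t (INR (rem n h)).
Proof.
  pose proof (INR_ge4 n Hn) as HN.
  destruct (lam_bounds n Hn) as [L1 L2].
  assert (0 < / INR n) by (apply Rinv_0_lt_compat; lra).
  assert (/ (INR n - 1) <= / 3) by (apply Rinv_le_contravar; lra).
  assert (Hl : 0 < lamn n <= 1) by lra.
  intros t. induction t as [|t IH]; intros h; cbn [value].
  - simpl. lra.
  - cbn [m_types q patience inst_n].
    rewrite rsum_const, Rinv_r by lra.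
    rewrite Rminus_diag, Rmult_0_l, Rplus_0_r.
    destruct (G_props (lamn n) t Hl) as [Gp [Gm Gc]].
    set (m := rem n h).
    set (x := INR m).
    assert (Hj : forall j, cust_val (inst_n n) pol n j (Arrive (Some j) :: h) (value (inst_n n) pol t)
        <= x - G (lamn n) (S t) x).
    { intros j. destruct m as [|m'] eqn:Em.
      - eapply Rle_trans.
        + apply (cust_bound n pol ltac:(lia) Hv _ (x - G (lamn n) t x - 1) (x - G (lamn n) t x) 0%nat).
          * intros h' Hh'. specialize (IH h'). rewrite Hh' in IH. exact IH.
          * intros h' Hh'. discriminate.
          * lra.
          * rewrite rem_arrive. auto.
        + rewrite offl_arrive. fold m. rewrite Em. unfold x. simpl.
          rewrite g0, !G_zero. lra.
      - assert (Hx : 1 <= x) by (unfold x; rewrite S_INR; pose proof (pos_INR m'); lra).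
        eapply Rle_trans.
        + apply (cust_bound n pol ltac:(lia) Hv _ ((x - 1) - G (lamn n) t (x - 1)) (x - G (lamn n) t x) (S m')).
          * intros h' Hh'. specialize (IH h'). rewrite Hh' in IH. exact IH.
          * intros h' Hh'. specialize (IH h'). injection Hh' as Hh'.
            assert (E1 : INR (rem n h') = x - 1) by (unfold x; rewrite S_INR, Hh'; ring).
            rewrite E1 in IH. exact IH.
          * pose proof (Gm (x - 1) x ltac:(lra) ltac:(lra)). lra.
          * rewrite rem_arrive. auto.
        + rewrite offl_arrive. fold m. rewrite Em.
          rewrite <- (exp_lam n (S m')) by lia. fold x.
          simpl G. unfold g.
          set (P := exp (- (lamn n * x))).
          assert (HP : 0 <= P <= 1).
          { split; [left; apply exp_pos|]. unfold P. rewrite <- exp_0. apply exp_mono. nra. }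
          replace (x - 1 + P) with ((1 - P) * (x - 1) + (1 - (1 - P)) * x) by ring.
          pose proof (Gc (1 - P) (x - 1) x ltac:(lra) ltac:(lra) ltac:(lra)). lra. }
    eapply Rle_trans.
    + apply rsum_le. intros j _. apply Rmult_le_compat_l; [lra|]. apply Hj.
    + rewrite rsum_const. rewrite <- Rmult_assoc, Rinv_r by lra. lra.
Qed.

Lemma rev_bound n pol : (4 <= n)%nat -> valid_policy (inst_n n) pol ->
  expected_revenue (inst_n n) pol <= INR n * (1 - ln Bc) + 4.
Proof.
  intros Hn Hv. unfold expected_revenue. cbn [horizon inst_n].
  eapply Rle_trans; [apply value_bound; auto|]. rewrite rem_nil.
  pose proof (INR_ge4 n Hn) as HN.
  destruct (lam_bounds n Hn) as [L1 L2].
  assert (0 < / INR n) by (apply Rinv_0_lt_compat; lra).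
  assert (/ (INR n - 1) <= / 3) by (apply Rinv_le_contravar; lra).
  assert (Hl : 0 < lamn n < 1) by lra.
  assert (Hu : 0 <= exp (lamn n * INR n) - 1).
  { rewrite <- exp_0. assert (exp 0 <= exp (lamn n * INR n)) by (apply exp_mono; nra). lra. }
  pose proof (compare (lamn n) _ n Hl Hu 0 (INR n) ltac:(lra) ltac:(rewrite w0; lra)) as Hc.
  simpl in Hc. pose proof (wn_bound n Hn). lra.
Qed.

Lemma rsum_ext k f f' : (forall i, (i < k)%nat -> f i = f' i) -> rsum k f = rsum k f'.
Proof. intros H. apply Rle_antisym; apply rsum_le; intros i Hi; rewrite H by auto; lra. Qed.

Lemma opt_n n : (1 <= n)%nat -> is_lub (lp_value (inst_n n)) (INR n).
Proof.
  intros Hn. assert (HN : 1 <= INR n) by (apply le_INR in Hn; simpl in Hn; lra).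
  assert (Hi : 0 < / INR n) by (apply Rinv_0_lt_compat; lra).
  split.
  - intros v [x [[_ [Hc _]] ->]]. unfold lp_obj. cbn [m_types n_items horizon q p r inst_n].
    cbn [m_types n_items horizon q p r inst_n] in Hc.
    apply Rle_trans with (rsum n (fun _ => 1)); [|rewrite rsum_const; lra].
    apply rsum_le. intros j Hj. rewrite Rinv_r by lra.
    rewrite (rsum_ext _ _ (fun i => / INR n * x i j)) by (intros; ring).
    specialize (Hc j Hj). lra.
  - intros b Hb. apply Hb. exists (fun _ _ => 1). split.
    + unfold lp_feasible. cbn [m_types n_items horizon q p r patience inst_n].
      repeat split.
      * intros i _. rewrite rsum_const. right. field. lra.
      * intros j _. rewrite rsum_const. right. field. lra.
      * intros j _. rewrite rsum_const. lra.
      * lra.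
      * lra.
    + unfold lp_obj. cbn [m_types n_items horizon q p r inst_n].
      rewrite !rsum_const. field. lra.
Qed.

Lemma archi r : exists N : nat, r < INR N.
Proof.
  destruct (archimed r) as [H1 _].
  destruct (Z_le_gt_dec 0 (up r)) as [Hz|Hz].
  - exists (Z.to_nat (up r)). rewrite INR_IZR_INZ, Z2Nat.id by auto. lra.
  - exists 0%nat. simpl. assert (Hz2 : (up r < 0)%Z) by lia. apply IZR_lt in Hz2. lra.
Qed.

Lemma pick_n eps : 0 < eps -> exists N, forall n, (N <= n)%nat ->
  (4 <= n)%nat /\ 4 <= eps * INR n.
Proof.
  intros He. destruct (archi (4 / eps)) as [N HN]. exists (Nat.max 4 N).
  intros n Hn. split; [lia|].
  assert (INR N <= INR n) by (apply le_INR; lia).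
  assert (4 / eps * eps = 4) by (field; lra).
  nra.
Qed.

Theorem lemma3p3 :
  (forall (OPT A : nat -> R),
     (forall n, (1 <= n)%nat -> is_lub (lp_value (inst_n n)) (OPT n)) ->
     (forall n, (1 <= n)%nat -> is_lub (achievable (inst_n n)) (A n)) ->
     (* limsup_{n -> oo} A n / OPT n <= 1 - ln (2 - 1/e) *)
     forall eps, 0 < eps ->
       exists N, forall n, (N <= n)%nat -> (1 <= n)%nat ->
         A n / OPT n <= ratio_bound + eps)
  /\
  (forall eps, 0 < eps ->
     exists I : instance,
       wf_instance I /\
       (forall j, (j < m_types I)%nat -> rsum (n_items I) (fun i => p I i j) <= 1) /\
       (forall j, (j < m_types I)%nat -> (n_items I <= patience I j)%nat) /\
       exists OPT, is_lub (lp_value I) OPT /\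
         forall pol, valid_policy I pol ->
           expected_revenue I pol <= (ratio_bound + eps) * OPT).
Proof.
  split.
  - intros OPT A HO HA eps He. destruct (pick_n eps He) as [N HN].
    exists N. intros n Hn H1. destruct (HN n Hn) as [H4 He4].
    pose proof (INR_ge4 n H4) as HI.
    rewrite (is_lub_u _ _ _ (HO n H1) (opt_n n H1)).
    assert (HA' : A n <= INR n * (1 - ln Bc) + 4).
    { apply (HA n H1). intros v [pol [Hv ->]]. apply rev_bound; auto. }
    unfold ratio_bound. fold Bc.
    apply (Rmult_le_reg_r (INR n)); [lra|].
    unfold Rdiv. rewrite Rmult_assoc, Rinv_l by lra. nra.
  - intros eps He. destruct (pick_n eps He) as [N HN].
    destruct (HN (Nat.max 4 N) ltac:(lia)) as [H4 He4].
    set (n := Nat.max 4 N) in *.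
    pose proof (INR_ge4 n H4) as HI.
    assert (Hi : 0 < / INR n) by (apply Rinv_0_lt_compat; lra).
    assert (Hi1 : / INR n <= 1).
    { rewrite <- Rinv_1. apply Rinv_le_contravar; lra. }
    exists (inst_n n). cbn [m_types n_items horizon q p r patience inst_n].
    split; [|split; [|split]].
    + unfold wf_instance. cbn [m_types n_items horizon q p r patience inst_n].
      repeat split; intros; try lra; try lia.
      rewrite rsum_const. right. field. lra.
    + intros j _. rewrite rsum_const. right. field. lra.
    + intros j _. lia.
    + exists (INR n). split; [apply opt_n; lia|].
      intros pol Hv. eapply Rle_trans; [apply rev_bound; auto|].
      unfold ratio_bound. fold Bc. nra.
Qed.
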